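(* There is a constant $C>0$ such that for any distinct integers $n_1,n_2$ there exists an integer $n_3$ with $n_3\bmod\tau\in(n_1\bmod\tau,\,n_2\bmod\tau)$ and $|n_3|<C\max(|n_1|,|n_2|)$.
   Context: $\tau=\frac{1+\sqrt5}{2}$. For real $x$, $x\bmod\tau$ is its image in $\mathbb{R}/\tau\mathbb{Z}$; for $a,b$ in this circle, $(a,b)$ is the open arc from $a$ to $b$ in the positive direction. The constant $C$ is independent of all variables. *)

(* Defs.v *)
From Stdlib Require Import Reals ZArith.
Open Scope R_scope.

Definition tau : R := (1 + sqrt 5) / 2.

(* Canonical representative in [0, tau) of the class of x in R / tau Z.
   Int_part y = floor y. *)
Definition rmod_tau (x : R) : R := x - tau * IZR (Int_part (x / tau)).

(* x mod tau lies in the open positively oriented arc from (a mod tau)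
   to (b mod tau) on the circle R / tau Z: the positive displacement from a
   to x is strictly between 0 and the positive displacement from a to b. *)
Definition in_open_arc (x a b : R) : Prop :=
  0 < rmod_tau (x - a) /\ rmod_tau (x - a) < rmod_tau (b - a).

(* Main.v *)
Require Import Defs.
From Stdlib Require Import Reals ZArith Lra Lia Psatz.
Open Scope R_scope.

Lemma s5_facts : sqrt 5 * sqrt 5 = 5 /\ 0 <= sqrt 5.
Proof. split; [apply sqrt_sqrt; lra | apply sqrt_pos]. Qed.

Lemma tau_bounds : 1.6 < tau < 1.62.
Proof. destruct s5_facts as [H1 H2]; unfold tau; split; nra. Qed.

Lemma tau_sq : tau * tau = tau + 1.
Proof. destruct s5_facts as [H1 H2]; unfold tau; nra. Qed.

Lemma rmod_eq x (m : Z) : 0 <= x - tau * IZR m < tau -> rmod_tau x = x - tau * IZR m.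
Proof.
  intros [H1 H2]. unfold rmod_tau.
  destruct tau_bounds as [T1 T2].
  assert (A1 : IZR m <= x / tau).
  { apply (Rmult_le_reg_r tau); [lra|]. unfold Rdiv. rewrite Rmult_assoc, Rinv_l by lra. lra. }
  assert (A2 : x / tau < IZR m + 1).
  { apply (Rmult_lt_reg_r tau); [lra|]. unfold Rdiv. rewrite Rmult_assoc, Rinv_l by lra. lra. }
  destruct (base_Int_part (x / tau)) as [B1 B2].
  set (k := Int_part (x / tau)) in *.
  assert (k < m + 1)%Z by (apply lt_IZR; rewrite plus_IZR; simpl; lra).
  assert (m < k + 1)%Z by (apply lt_IZR; rewrite plus_IZR; simpl; lra).
  replace k with m by lia. reflexivity.
Qed.

Lemma rmod_form x : 0 <= rmod_tau x < tau /\ rmod_tau x = x - tau * IZR (Int_part (x / tau)).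
Proof.
  destruct tau_bounds as [T1 T2].
  destruct (base_Int_part (x / tau)) as [B1 B2].
  set (k := Int_part (x / tau)) in *.
  unfold rmod_tau; fold k. split; [|reflexivity].
  assert (E : x = tau * (x / tau)) by (field; lra).
  set (y := x / tau) in *. rewrite E.
  split; nra.
Qed.

Fixpoint pq (n : nat) : Z * Z :=
  match n with O => (1, 0)%Z | S n => let (p, q) := pq n in (2*p+q, p+q)%Z end.

Lemma pq_inv n : (1 <= fst (pq n) /\ 0 <= snd (pq n) /\
   fst (pq n) * fst (pq n) - fst (pq n) * snd (pq n) - snd (pq n) * snd (pq n) = 1)%Z.
Proof.
  induction n as [|n IH]; cbn [pq fst snd]. lia.
  destruct (pq n) as [p q]; cbn [fst snd] in *. destruct IH as [I1 [I2 I3]].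
  split; [lia|split; [lia|]]. rewrite <- I3; ring.
Qed.

Definition e n := IZR (fst (pq n)) - IZR (snd (pq n)) * tau.

Lemma e_S n : e (S n) = (2 - tau) * e n.
Proof.
  unfold e; cbn [pq]. destruct (pq n) as [p q]; cbn [fst snd].
  rewrite !plus_IZR, !mult_IZR.
  apply Rminus_diag_uniq.
  replace (IZR 2 * IZR p + IZR q - (IZR p + IZR q) * tau - (2 - tau) * (IZR p - IZR q * tau))
    with (- IZR q * (tau * tau - tau - 1)) by (simpl; ring).
  rewrite tau_sq. ring.
Qed.

Lemma e_pow n : e n = (2 - tau) ^ n.
Proof. induction n; [unfold e; simpl; ring | rewrite e_S, IHn; simpl; ring]. Qed.

Lemma e_pos n : 0 < e n.
Proof. rewrite e_pow. apply pow_lt. destruct tau_bounds; lra. Qed.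

Lemma pe_le1 n : IZR (fst (pq n)) * e n <= 1.
Proof.
  destruct (pq_inv n) as [H1 [H2 H3]].
  pose proof (e_pos n) as Hp. unfold e in *.
  destruct (pq n) as [p q]; simpl in *.
  assert (N : (IZR p - IZR q * tau) * (IZR p - IZR q + IZR q * tau) = 1).
  { replace 1 with (IZR (p*p - p*q - q*q)) by (rewrite H3; reflexivity).
    rewrite !minus_IZR, !mult_IZR.
    apply Rminus_diag_uniq.
    replace ((IZR p - IZR q * tau) * (IZR p - IZR q + IZR q * tau) -
      (IZR p * IZR p - IZR p * IZR q - IZR q * IZR q))
    with (- IZR q * IZR q * (tau * tau - tau - 1)) by ring.
    rewrite tau_sq; ring. }
  apply IZR_le in H2. destruct tau_bounds.
  assert (IZR p <= IZR p - IZR q + IZR q * tau) by nra.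
  nra.
Qed.

Lemma small_aux n : forall L, e n < L ->
  exists p q : Z, (1 <= p)%Z /\ 0 < IZR p - IZR q * tau < L /\
    IZR p * (2 - tau) * Rmin L 1 <= 1.
Proof.
  destruct tau_bounds as [T1 T2].
  induction n as [|n IH]; intros L HL.
  - exists 1%Z, 0%Z. unfold e in HL; cbn [pq fst snd] in HL.
    split; [lia|]. split; [simpl; lra|].
    rewrite Rmin_right by lra. simpl; lra.
  - destruct (Rlt_or_le (e n) L) as [H|H]; [now apply IH|].
    exists (fst (pq (S n))), (snd (pq (S n))).
    destruct (pq_inv (S n)) as [P1 _].
    split; [exact P1|]. pose proof (e_pos (S n)).
    split; [unfold e in *; lra|].
    pose proof (pe_le1 (S n)). rewrite e_S in *.
    assert (Rmin L 1 <= L) by apply Rmin_l.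
    assert (0 <= Rmin L 1 ).
    { unfold Rmin; destruct Rle_dec; [|lra]. pose proof (e_pos n). lra. }
    apply IZR_le in P1.
    assert ((2 - tau) * Rmin L 1 <= (2 - tau) * e n) by nra.
    nra.
Qed.

Lemma small L : 0 < L ->
  exists p q : Z, (1 <= p)%Z /\ 0 < IZR p - IZR q * tau < L /\
    IZR p * (2 - tau) * Rmin L 1 <= 1.
Proof.
  intros HL. destruct tau_bounds as [T1 T2].
  destruct (pow_lt_1_zero (2 - tau)) with (y := L) as [N HN].
  { rewrite Rabs_right; lra. } exact HL.
  apply (small_aux N). rewrite e_pow.
  specialize (HN N (le_n N)). rewrite Rabs_right in HN; [exact HN|].
  apply Rle_ge, pow_le; lra.
Qed.

Lemma descent : forall n : nat, forall x y : Z, (Z.abs x + Z.abs y <= Z.of_nat n)%Z ->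
  (x*x - x*y - y*y = 0)%Z -> x = 0%Z /\ y = 0%Z.
Proof.
  induction n as [|n IH]; intros x y Hb He.
  - lia.
  - destruct (Z.Even_or_Odd x) as [[a Ha]|[a Ha]];
    destruct (Z.Even_or_Odd y) as [[b Hb']|[b Hb']]; subst.
    + assert (E : (a*a - a*b - b*b = 0)%Z) by lia.
      destruct (Z.eq_dec a 0); destruct (Z.eq_dec b 0); try lia;
      (destruct (IH a b) as [? ?]; [lia|exact E|lia]).
    + exfalso. ring_simplify in He. lia.
    + exfalso. ring_simplify in He. lia.
    + exfalso. ring_simplify in He. lia.
Qed.

Lemma abs_ge1 (z : Z) : z <> 0%Z -> 1 <= Rabs (IZR z).
Proof. intros H. rewrite <- abs_IZR. apply IZR_le. lia. Qed.

Theorem lemma15 :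
  exists C : R, 0 < C /\
    forall n1 n2 : Z, n1 <> n2 ->
      exists n3 : Z,
        in_open_arc (IZR n3) (IZR n1) (IZR n2) /\
        Rabs (IZR n3) < C * Rmax (Rabs (IZR n1)) (Rabs (IZR n2)).
Proof.
  exists 100. split; [lra|]. intros n1 n2 Hne.
  destruct tau_bounds as [T1 T2].
  set (M := Rmax (Rabs (IZR n1)) (Rabs (IZR n2))).
  assert (M1 : Rabs (IZR n1) <= M) by apply Rmax_l.
  assert (M2 : Rabs (IZR n2) <= M) by apply Rmax_r.
  assert (M3 : 1 <= M).
  { destruct (Z.eq_dec n1 0).
    - pose proof (abs_ge1 n2 ltac:(lia)). lra.
    - pose proof (abs_ge1 n1 n). lra. }
  set (d := (n2 - n1)%Z).
  assert (Hd : IZR n2 - IZR n1 = IZR d) by (unfold d; rewrite minus_IZR; ring).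
  destruct (rmod_form (IZR n2 - IZR n1)) as [[L0 L1] LE].
  set (L := rmod_tau (IZR n2 - IZR n1)) in *.
  set (m := Int_part ((IZR n2 - IZR n1) / tau)) in *.
  rewrite Hd in LE.
  set (N := (d*d - d*m - m*m)%Z).
  assert (NZ : N <> 0%Z).
  { intro HN. destruct (descent (Z.abs_nat d + Z.abs_nat m) d m) as [H1 _]; [lia|exact HN|].
    unfold d in H1; lia. }
  set (X := IZR d - IZR m + IZR m * tau).
  assert (LX : L * X = IZR N).
  { rewrite LE. unfold X, N. rewrite !minus_IZR, !mult_IZR.
    apply Rminus_diag_uniq.
    replace ((IZR d - tau * IZR m) * (IZR d - IZR m + IZR m * tau) -
      (IZR d * IZR d - IZR d * IZR m - IZR m * IZR m))
    with (- IZR m * IZR m * (tau * tau - tau - 1)) by ring.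
    rewrite tau_sq; ring. }
  assert (N1 : 1 <= Rabs (IZR N)) by (apply abs_ge1; exact NZ).
  assert (Lpos : 0 < L).
  { destruct (Req_dec L 0) as [H|H]; [|lra].
    rewrite H, Rmult_0_l in LX. rewrite <- LX, Rabs_R0 in N1. lra. }
  assert (Dd : Rabs (IZR d) <= 2 * M).
  { rewrite <- Hd. pose proof (Rabs_triang (IZR n2) (- IZR n1)).
    rewrite Rabs_Ropp in H. unfold Rminus. lra. }
  assert (Mm : Rabs (IZR m) <= Rabs (IZR d) + 1).
  { assert (tau * IZR m = IZR d - L) by lra.
    unfold Rabs in *; destruct (Rcase_abs (IZR m)); destruct (Rcase_abs (IZR d)); nra. }
  assert (XB : Rabs X <= 11 * M).
  { assert (X = L + IZR m * (2 * tau - 1)) by (unfold X; lra).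
    assert (Rabs X <= Rabs L + Rabs (IZR m * (2*tau - 1))).
    { rewrite H. apply Rabs_triang. }
    rewrite Rabs_mult, (Rabs_right L), (Rabs_right (2*tau-1)) in H0 by lra.
    pose proof (Rabs_pos (IZR m)). nra. }
  assert (LB : 1 <= L * Rabs X).
  { rewrite <- (Rabs_right L) at 1 by lra. rewrite <- Rabs_mult, LX. exact N1. }
  assert (MinB : 1 <= Rmin L 1 * (11 * M)).
  { unfold Rmin; destruct Rle_dec; [|lra].
    pose proof (Rabs_pos X). nra. }
  destruct (small L Lpos) as [p [q [P1 [[Q1 Q2] Q3]]]].
  apply IZR_le in P1.
  assert (PB : IZR p <= 33 * M).
  { assert (0 <= Rmin L 1) by (unfold Rmin; destruct Rle_dec; lra).
    assert (IZR p * (2 - tau) <= 11 * M) by nra.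
    nra. }
  exists (n1 + p)%Z. split.
  - unfold in_open_arc.
    replace (IZR (n1 + p) - IZR n1) with (IZR p) by (rewrite plus_IZR; ring).
    rewrite (rmod_eq (IZR p) q) by lra.
    fold L. lra.
  - rewrite plus_IZR.
    pose proof (Rabs_triang (IZR n1) (IZR p)).
    rewrite (Rabs_right (IZR p)) in H by lra. lra.
Qed.
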